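(* Let $(X_1,\|\cdot\|_1),\dots,(X_n,\|\cdot\|_n)$ be $F$-spaces (with $\|x\|_i=d_i(x,0)$ the $F$-norm of $X_i$) and let $\Phi$ be a Young function satisfying the Mulholland condition. On the vector space direct sum $\bigoplus_{i=1}^n X_i$ define $$d_\Phi\big((x_1,\dots,x_n),(y_1,\dots,y_n)\big)=\Phi^{-1}\Big(\sum_{i=1}^n\Phi(\|x_i-y_i\|_i)\Big).$$ Then $\big(\bigoplus_{i=1}^n X_i,d_\Phi\big)$ is an $F$-space.
   Context: A Young function is a convex, left semicontinuous, even function $\Phi:\mathbb R\to[0,\infty]$ with $\Phi(0)=0$ and $\lim_{x\to\infty}\Phi(x)=\infty$. A Young function $\Phi$ satisfies the Mulholland condition if it is continuous and strictly increasing on $[0,\infty)$ and $\log\Phi(x)$ is a convex function of $\log x$; equivalently $\Phi(x)=|x|e^{\chi(\log|x|)}$ for a continuous increasing convex function $\chi$ (called the characteristic function of $\Phi$). $\Phi^{-1}$ denotes the inverse of $\Phi$ restricted to $[0,\infty)$. An $F$-space is a vector space $X$ over $\mathbb R$ or $\mathbb C$ with a translation-invariant metric $d$ such that scalar multiplication and addition are continuous and $(X,d)$ is complete; its $F$-norm is $\|x\|=d(x,0)$. *)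

(* Defs.v *)
From HB Require Import structures.
From mathcomp Require Import all_boot all_order all_algebra.
From mathcomp Require Import all_classical all_reals.
From mathcomp Require Import all_analysis.
Set Implicit Arguments. Unset Strict Implicit. Unset Printing Implicit Defensive.
Import Order.TTheory GRing.Theory Num.Theory.
Import numFieldNormedType.Exports.
Local Open Scope classical_set_scope.
Local Open Scope ring_scope.

Record vdata (K : numFieldType) := VData {
  vcarrier :> Type;
  vadd : vcarrier -> vcarrier -> vcarrier;
  vopp : vcarrier -> vcarrier;
  vzero : vcarrier;
  vscale : K -> vcarrier -> vcarrier }.

Definition is_vspace (K : numFieldType) (V : vdata K) : Prop :=
  (forall x y z : V, vadd x (vadd y z) = vadd (vadd x y) z) /\
  (forall x y : V, vadd x y = vadd y x) /\
  (forall x : V, vadd (vzero V) x = x) /\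
  (forall x : V, vadd (vopp x) x = vzero V) /\
  (forall x : V, vscale 1 x = x) /\
  (forall (a b : K) (x : V), vscale a (vscale b x) = vscale (a * b) x) /\
  (forall (a : K) (x y : V), vscale a (vadd x y) = vadd (vscale a x) (vscale a y)) /\
  (forall (a b : K) (x : V), vscale (a + b) x = vadd (vscale a x) (vscale b x)).

Definition lmod_vdata (K : numFieldType) (X : lmodType K) : vdata K :=
  @VData K X (fun x y : X => x + y) (fun x : X => - x) (0 : X)
    (fun (a : K) (x : X) => a *: x).

Definition is_Fspace (R : realType) (K : numFieldType) (V : vdata K)
    (d : V -> V -> R) : Prop :=
  is_vspace V /\
      [/\ (forall x y : V, d x y = 0 <-> x = y),
          (forall x y : V, d x y = d y x)
        & (forall x y z : V, d x z <= d x y + d y z)] /\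
      (forall x y z : V, d (vadd x z) (vadd y z) = d x y) /\
      (forall (x0 y0 : V) (e : R), 0 < e -> exists2 del : R, 0 < del &
         forall x y : V, d x x0 < del -> d y y0 < del ->
           d (vadd x y) (vadd x0 y0) < e) /\
      (forall (a0 : K) (x0 : V) (e : R), 0 < e ->
         exists (delK : K) (del : R), [/\ 0 < delK, 0 < del &
         forall (a : K) (x : V), `|a - a0| < delK -> d x x0 < del ->
           d (vscale a x) (vscale a0 x0) < e]) /\
      (forall u : nat -> V,
         (forall e : R, 0 < e -> exists N : nat, forall m n : nat,
             (N <= m)%N -> (N <= n)%N -> d (u m) (u n) < e) ->
         exists l : V, forall e : R, 0 < e -> exists N : nat,
             forall n : nat, (N <= n)%N -> d (u n) l < e).

Definition Young (R : realType) (Phi : R -> \bar R) : Prop :=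
  (forall x, (0 <= Phi x)%E) /\
      (forall (x y lam : R), 0 <= lam <= 1 ->
         (Phi (lam * x + (1 - lam) * y)%R <= lam%:E * Phi x + (1 - lam)%:E * Phi y)%E) /\
      (forall (x : R) (a : \bar R), (a < Phi x)%E ->
         exists2 del : R, 0 < del & forall y, x - del < y <= x -> (a < Phi y)%E) /\
      (forall x, Phi (- x) = Phi x) /\
      Phi 0 = 0%E /\
      (forall M : R, exists N : R, forall x, N < x -> (M%:E < Phi x)%E).

(* Mulholland condition: continuous, strictly increasing on [0,oo), and
   log Phi(x) a convex function of log x, i.e. t |-> ln (Phi (exp t)) convex. *)
Definition Mulholland (R : realType) (Phi : R -> \bar R) : Prop :=
  [/\ {within [set x : R | 0 <= x], continuous Phi},
      (forall x y : R, 0 <= x -> x < y -> (Phi x < Phi y)%E)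
    & (forall (s t lam : R), 0 <= lam <= 1 ->
         ln (fine (Phi (expR (lam * s + (1 - lam) * t)))) <=
         lam * ln (fine (Phi (expR s))) + (1 - lam) * ln (fine (Phi (expR t))))].

Definition Phi_inv (R : realType) (Phi : R -> \bar R) (y : \bar R) : R :=
  xget 0 [set x : R | 0 <= x /\ Phi x = y].

Definition dsum_vdata (K : numFieldType) (n : nat) (X : 'I_n -> vdata K) : vdata K :=
  @VData K (forall i : 'I_n, X i)
    (fun x y i => vadd (x i) (y i))
    (fun x i => vopp (x i))
    (fun i => vzero (X i))
    (fun a x i => vscale a (x i)).

Definition d_Phi (R : realType) (K : numFieldType) (n : nat) (X : 'I_n -> vdata K)
    (d : forall i : 'I_n, X i -> X i -> R) (Phi : R -> \bar R)
    (x y : dsum_vdata X) : R :=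
  Phi_inv Phi (\sum_(i < n) Phi (d i (vadd (x i) (vopp (y i))) (vzero (X i))))%E.

(* Main.v *)
Require Import Defs.
From mathcomp Require Import all_boot all_order all_algebra.
From mathcomp Require Import all_classical all_reals all_analysis.
From mathcomp Require Import ring lra.
Set Implicit Arguments. Unset Strict Implicit. Unset Printing Implicit Defensive.
Import Order.TTheory GRing.Theory Num.Theory.
Import numFieldNormedType.Exports.
Local Open Scope classical_set_scope.
Local Open Scope ring_scope.

Lemma PhiE (R : realType) (Phi : R -> \bar R) :
  Young Phi -> Mulholland Phi -> forall x, Phi x = (fine (Phi x))%:E.
Proof.
move=> [H0 [_ [_ [Hev _]]]] [_ Hinc _].
have key : forall x, 0 <= x -> Phi x = (fine (Phi x))%:E.
  move=> x x0; have := Hinc x (x + 1) x0 ltac:(by rewrite ltrDl ltr01).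
  have := H0 x.
  case: (Phi x) => [r _ _ //| _ | ] /=.
    by rewrite ltNge leey.
  by [].
move=> x; case: (lerP 0 x) => [x0|x0]; first exact: key.
by rewrite -Hev key // oppr_ge0 ltW.
Qed.

Lemma phi_ge0 (R : realType) (Phi : R -> \bar R) :
  Young Phi -> forall x, 0 <= fine (Phi x).
Proof. by move=> [H0 _] x; apply: fine_ge0. Qed.

Lemma phi0 (R : realType) (Phi : R -> \bar R) :
  Young Phi -> fine (Phi 0) = 0.
Proof. by move=> [_ [_ [_ [_ [-> _]]]]]. Qed.

Lemma phi_lt (R : realType) (Phi : R -> \bar R) :
  Young Phi -> Mulholland Phi -> forall x y, 0 <= x -> x < y -> fine (Phi x) < fine (Phi y).
Proof.
move=> HY HM x y x0 xy; have [_ Hinc _] := HM.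
have := Hinc x y x0 xy; by rewrite (PhiE HY HM x) (PhiE HY HM y) lte_fin.
Qed.

Lemma phi_le (R : realType) (Phi : R -> \bar R) :
  Young Phi -> Mulholland Phi -> forall x y, 0 <= x -> x <= y -> fine (Phi x) <= fine (Phi y).
Proof.
move=> HY HM x y x0; rewrite le_eqVlt => /orP [/eqP->//|xy].
exact/ltW/(phi_lt HY HM).
Qed.

Lemma phi_le_inv (R : realType) (Phi : R -> \bar R) :
  Young Phi -> Mulholland Phi -> forall x y, 0 <= y ->
  fine (Phi x) <= fine (Phi y) -> x <= y.
Proof.
move=> HY HM x y y0 h; rewrite leNgt; apply/negP => yx.
by have := phi_lt HY HM y0 yx; rewrite ltNge h.
Qed.

Lemma phi_lt_inv (R : realType) (Phi : R -> \bar R) :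
  Young Phi -> Mulholland Phi -> forall x y, 0 <= y ->
  fine (Phi x) < fine (Phi y) -> x < y.
Proof.
move=> HY HM x y y0 h; rewrite ltNge; apply/negP => yx.
have : 0 <= x by apply: le_trans yx.
by move=> x0; have := phi_le HY HM y0 yx; rewrite leNgt h.
Qed.

Lemma phi_convex (R : realType) (Phi : R -> \bar R) :
  Young Phi -> Mulholland Phi -> forall x y lam, 0 <= lam <= 1 ->
  fine (Phi (lam * x + (1 - lam) * y)) <= lam * fine (Phi x) + (1 - lam) * fine (Phi y).
Proof.
move=> HY HM x y lam hl; have := (proj1 (proj2 HY)) x y lam hl.
by rewrite (PhiE HY HM (_ + _)) (PhiE HY HM x) (PhiE HY HM y) -!EFinM -EFinD lee_fin.
Qed.

Lemma phi_cont (R : realType) (Phi : R -> \bar R) :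
  Young Phi -> Mulholland Phi -> forall b,
  {within `[0, b], continuous (fun x => fine (Phi x))}.
Proof.
move=> HY HM b; have [Hc _ _] := HM.
apply: (@continuous_subspaceW _ _ _ [set x : R | 0 <= x]).
  by move=> x /=; rewrite in_itv /= => /andP[].
move=> x; have := Hc x.
rewrite /continuous_at /from_subspace /= => h.
have h2 : (Phi x0 @[x0 --> x] --> (fine (Phi x))%:E) by rewrite -(PhiE HY HM x).
apply: (fine_cvg h2); exact: subspace_filter.
Qed.

Lemma phi_inv_spec (R : realType) (Phi : R -> \bar R) :
  Young Phi -> Mulholland Phi -> forall y : R, 0 <= y ->
  0 <= Phi_inv Phi y%:E /\ fine (Phi (Phi_inv Phi y%:E)) = y.
Proof.
move=> HY HM y y0.
have [N HN] := (proj2 (proj2 (proj2 (proj2 (proj2 HY))))) y.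
set b := Num.max N 0 + 1.
have b0 : 0 <= b by rewrite /b addr_ge0 // le_max lexx orbT.
have yb : y < fine (Phi b).
  have := HN b ltac:(by rewrite /b ltr_pwDr // le_max lexx).
  by rewrite (PhiE HY HM b) lte_fin.
have := @IVT R (fun x => fine (Phi x)) 0 b y b0 (@phi_cont R Phi HY HM b).
rewrite (phi0 HY) /= => /(_ _)[].
  by rewrite ge_min le_max y0 (ltW yb) orbT.
move=> c; rewrite in_itv /= => /andP[c0 _] hc.
have ex : exists x, [set x : R | 0 <= x /\ Phi x = y%:E] x.
  by exists c; split => //; rewrite (PhiE HY HM c) hc.
have [h1 h2] := xgetPex 0 ex.
by rewrite /Phi_inv; split => //; rewrite h2.
Qed.

Lemma phi_gt0 (R : realType) (Phi : R -> \bar R) :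
  Young Phi -> Mulholland Phi -> forall x, 0 < x -> 0 < fine (Phi x).
Proof.
by move=> HY HM x x0; rewrite -(phi0 HY); apply: (phi_lt HY HM) => //.
Qed.

Definition chi (R : realType) (Phi : R -> \bar R) (t : R) := ln (fine (Phi (expR t))).

Lemma chi_conv (R : realType) (Phi : R -> \bar R) :
  Mulholland Phi -> forall p q1 q2 r : R, p <= q1 -> q1 <= r -> q1 + q2 = p + r ->
  chi Phi q1 + chi Phi q2 <= chi Phi p + chi Phi r.
Proof.
move=> [_ _ Hc] p q1 q2 r pq qr e.
have pr : p <= r by apply: le_trans qr.
case: (eqVneq p r) => [epr|npr].
  have e1 : q1 = p by apply/le_anti; rewrite pq epr qr.
  have e2 : q2 = r by move: e; rewrite e1 => /addrI.
  by rewrite e1 e2.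
have rp : 0 < r - p by rewrite subr_gt0 lt_neqAle npr pr.
set mu := (r - q1) / (r - p).
have mu0 : 0 <= mu by rewrite divr_ge0 // ?subr_ge0 // ltW.
have mu1 : mu <= 1 by rewrite ler_pdivrMr // mul1r lerD2l lerN2.
have E1 : q1 = mu * p + (1 - mu) * r.
  rewrite /mu; field; exact: lt0r_neq0.
have E2 : q2 = (1 - mu) * p + (1 - (1 - mu)) * r.
  have -> : q2 = p + r - q1 by rewrite -e addrAC subrr add0r.
  rewrite E1; ring.
have h1 := Hc p r mu ltac:(by rewrite mu0 mu1).
have h2 := Hc p r (1 - mu) ltac:(by rewrite subr_ge0 mu1 lerBlDr lerDl mu0).
rewrite /chi E1 E2.
apply: le_trans (lerD h1 h2) _.
rewrite le_eqVlt; apply/orP; left; apply/eqP; ring.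
Qed.

Lemma phi_ratio (R : realType) (Phi : R -> \bar R) :
  Young Phi -> Mulholland Phi -> forall c C s : R, 0 < c -> c <= C -> 0 <= s -> s <= 1 ->
  fine (Phi (C * s)) * fine (Phi c) <= fine (Phi (c * s)) * fine (Phi C).
Proof.
move=> HY HM c C s c0 cC s0 s1.
have C0 : 0 < C by apply: lt_le_trans cC.
case: (eqVneq s 0) => [->|sn0]; first by rewrite !mulr0 (phi0 HY) !mul0r.
have sp : 0 < s by rewrite lt_neqAle eq_sym sn0 s0.
set x := ln c; set X := ln C; set h := ln s.
have xX : x <= X by rewrite /x /X ler_ln ?posrE.
have h0 : h <= 0 by apply: ln_le0.
have HC : chi Phi (X + h) + chi Phi x <= chi Phi (x + h) + chi Phi X.
  apply: (chi_conv HM).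
  - by rewrite lerD2r.
  - by rewrite gerDl.
  - ring.
move: HC.
rewrite /chi !expRD /x /X /h !lnK ?posrE //.
have P1 : 0 < fine (Phi (C * s)) by apply: (phi_gt0 HY HM); rewrite mulr_gt0.
have P2 : 0 < fine (Phi (c * s)) by apply: (phi_gt0 HY HM); rewrite mulr_gt0.
have P3 : 0 < fine (Phi c) by apply: (phi_gt0 HY HM).
have P4 : 0 < fine (Phi C) by apply: (phi_gt0 HY HM).
rewrite -!lnM ?posrE // ler_ln ?posrE //; exact: mulr_gt0.
Qed.

Lemma mul_point (R : realType) (Phi : R -> \bar R) :
  Young Phi -> Mulholland Phi -> forall A B a b : R, 0 < A -> 0 < B ->
  0 <= a -> a <= A -> 0 <= b -> b <= B ->
  fine (Phi (a + b)) <= fine (Phi (A + B)) *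
    (A / (A + B) * (fine (Phi a) / fine (Phi A)) + (1 - A / (A + B)) * (fine (Phi b) / fine (Phi B))).
Proof.
move=> HY HM A B a b A0 B0 a0 aA b0 bB.
set C := A + B; set lam := A / C.
have C0 : 0 < C by rewrite addr_gt0.
have PA := phi_gt0 HY HM A0; have PB := phi_gt0 HY HM B0.
have PC := phi_gt0 HY HM C0.
have lam01 : 0 <= lam <= 1.
  by rewrite /lam divr_ge0 ?(ltW A0) ?(ltW C0) //= ler_pdivrMr // mul1r /C lerDl (ltW B0).
have E : a + b = lam * (C * (a / A)) + (1 - lam) * (C * (b / B)).
  rewrite /lam /C; field; rewrite ?lt0r_neq0 //.
rewrite E; apply: le_trans (phi_convex HY HM _ _ lam01) _.
have r1 : fine (Phi (C * (a / A))) <= fine (Phi C) * (fine (Phi a) / fine (Phi A)).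
  have := phi_ratio HY HM (c:=A) (C:=C) (s:=a/A) A0 ltac:(by rewrite /C lerDl ltW)
    ltac:(by rewrite divr_ge0 // ltW) ltac:(by rewrite ler_pdivrMr // mul1r).
  rewrite (_ : A * (a / A) = a); last by rewrite mulrCA divff ?lt0r_neq0 // mulr1.
  by move=> h; rewrite (mulrA (fine (Phi C))) ler_pdivlMr // [_ * fine (Phi a)]mulrC.
have r2 : fine (Phi (C * (b / B))) <= fine (Phi C) * (fine (Phi b) / fine (Phi B)).
  have := phi_ratio HY HM (c:=B) (C:=C) (s:=b/B) B0 ltac:(by rewrite /C lerDr ltW)
    ltac:(by rewrite divr_ge0 // ltW) ltac:(by rewrite ler_pdivrMr // mul1r).
  rewrite (_ : B * (b / B) = b); last by rewrite mulrCA divff ?lt0r_neq0 // mulr1.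
  by move=> h; rewrite (mulrA (fine (Phi C))) ler_pdivlMr // [_ * fine (Phi b)]mulrC.
have l0 : 0 <= lam by case/andP: lam01.
have l1 : 0 <= 1 - lam by case/andP: lam01 => _; rewrite subr_ge0.
rewrite mulrDr; apply: lerD.
  by rewrite [fine (Phi C) * _]mulrCA; apply: ler_wpM2l.
by rewrite [fine (Phi C) * _]mulrCA; apply: ler_wpM2l.
Qed.

Lemma sum_term (R : numDomainType) n (f : 'I_n -> R) (i : 'I_n) :
  (forall j, 0 <= f j) -> f i <= \sum_(j < n) f j.
Proof.
move=> h; rewrite (bigD1 i) //= lerDl; apply: sumr_ge0 => j _; exact: h.
Qed.

Lemma mulholland (R : realType) (Phi : R -> \bar R) :
  Young Phi -> Mulholland Phi -> forall n (a b : 'I_n -> R) (A B : R),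
  (forall i, 0 <= a i) -> (forall i, 0 <= b i) -> 0 <= A -> 0 <= B ->
  fine (Phi A) = \sum_(i < n) fine (Phi (a i)) ->
  fine (Phi B) = \sum_(i < n) fine (Phi (b i)) ->
  \sum_(i < n) fine (Phi (a i + b i)) <= fine (Phi (A + B)).
Proof.
move=> HY HM n a b A B a0 b0 A0 B0 hA hB.
have aA : forall i, a i <= A.
  move=> i; apply: (phi_le_inv HY HM) => //; rewrite hA.
  by apply: sum_term => j; exact: phi_ge0.
have bB : forall i, b i <= B.
  move=> i; apply: (phi_le_inv HY HM) => //; rewrite hB.
  by apply: sum_term => j; exact: phi_ge0.
case: (eqVneq A 0) => [eA|nA].
  have ea : forall i, a i = 0 by move=> i; apply/le_anti; rewrite a0 -eA aA.
  by rewrite eA add0r; under eq_bigr => i _ do rewrite ea add0r; rewrite hB.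
case: (eqVneq B 0) => [eB|nB].
  have eb : forall i, b i = 0 by move=> i; apply/le_anti; rewrite b0 -eB bB.
  by rewrite eB addr0; under eq_bigr => i _ do rewrite eb addr0; rewrite hA.
have Ap : 0 < A by rewrite lt_neqAle eq_sym nA A0.
have Bp : 0 < B by rewrite lt_neqAle eq_sym nB B0.
have PA := phi_gt0 HY HM Ap; have PB := phi_gt0 HY HM Bp.
apply: le_trans (ler_sum _ (fun i _ => mul_point HY HM Ap Bp (a0 i) (aA i) (b0 i) (bB i))) _.
rewrite -mulr_sumr big_split /= -!mulr_sumr -!mulr_suml -hA -hB.
by rewrite !divff ?lt0r_neq0 // !mulr1 addrC subrK mulr1.
Qed.

Lemma common_bound (F : numFieldType) n (f : 'I_n -> F) :
  (forall i, 0 < f i) -> exists m, 0 < m /\ forall i, m <= f i.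
Proof.
move=> hf; set s := \sum_(j < n) (f j)^-1.
have s0 : 0 <= s by apply: sumr_ge0 => j _; rewrite invr_ge0 ltW.
have s1 : 0 < 1 + s by rewrite ltr_pwDl.
exists (1 + s)^-1; split; first by rewrite invr_gt0.
move=> i; rewrite -lef_pV2 ?posrE ?invr_gt0 // invrK.
apply: (@le_trans _ _ s); last by rewrite lerDr.
by apply: (sum_term (f := fun j => (f j)^-1)) => j; rewrite invr_ge0 ltW.
Qed.

Unset Implicit Arguments.
Set Strict Implicit.

Theorem mainTheorem1 (R : realType) (K : numFieldType) (n : nat)
    (X : 'I_n -> lmodType K) (d : forall i : 'I_n, X i -> X i -> R)
    (Phi : R -> \bar R) :
  (forall i : 'I_n, @is_Fspace R K (lmod_vdata (X i)) (d i)) ->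
  Young Phi -> Mulholland Phi ->
  @is_Fspace R K (dsum_vdata (fun i => lmod_vdata (X i))) (@d_Phi R K n (fun i => lmod_vdata (X i)) d Phi).
Proof.
move=> HF HY HM.
set V := dsum_vdata (fun i => lmod_vdata (X i)).
have dge0 : forall i (a b : X i), 0 <= d i a b.
  move=> i a b; have [_ [[h0 hs ht] _]] := HF i.
  have h1 := ht a b a; have h2 : d i a a = 0 by apply/h0.
  rewrite (hs b a) in h1; lra.
have dtrans : forall i (a b : X i), d i (a - b) 0 = d i a b.
  move=> i a b; have [_ [_ [htr _]]] := HF i.
  by have := htr a b (- b); rewrite /= subrr.
pose S := fun x y : V => \sum_(i < n) fine (Phi (d i (x i) (y i))).
have Sge0 : forall x y, 0 <= S x y.
  by move=> x y; apply: sumr_ge0 => i _; apply: phi_ge0.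
have DE : forall x y : V, @d_Phi R K n (fun i => lmod_vdata (X i)) d Phi x y = Phi_inv Phi (S x y)%:E.
  move=> x y; rewrite /d_Phi /=.
  under eq_bigr => i _ do rewrite dtrans (PhiE HY HM).
  by rewrite sumEFin.
rewrite (funext (fun x => funext (DE x))).
pose D := fun x y : V => Phi_inv Phi (S x y)%:E.
rewrite -/D.
have Dsp : forall x y, 0 <= D x y /\ fine (Phi (D x y)) = S x y.
  by move=> x y; apply: phi_inv_spec.
have comp_le : forall x y i, d i (x i) (y i) <= D x y.
  move=> x y i; have [h0 h1] := Dsp x y.
  apply: (phi_le_inv HY HM) => //; rewrite h1.
  by apply: (sum_term (f := fun j => fine (Phi (d j (x j) (y j))))) => j; apply: phi_ge0.
have small : forall x y e, 0 < e -> (forall i, d i (x i) (y i) < e / n.+1%:R) -> D x y < e.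
  move=> x y e e0 h; have [h0 h1] := Dsp x y.
  apply: (phi_lt_inv HY HM); first exact: ltW.
  rewrite h1.
  have k0 : 0 < n.+1%:R :> R by rewrite ltr0n.
  have l01 : 0 <= (n.+1%:R : R)^-1 <= 1.
    by rewrite invr_ge0 ltW //= invf_le1 // ler1n.
  have hc := phi_convex HY HM e 0 l01.
  rewrite mulr0 addr0 (phi0 HY) mulr0 addr0 in hc.
  apply: (@le_lt_trans _ _ (\sum_(i < n) fine (Phi (e / n.+1%:R)))).
    apply: ler_sum => i _; apply: (phi_le HY HM); first exact: dge0.
    exact: ltW.
  rewrite sumr_const card_ord.
  have pe := phi_gt0 HY HM e0.
  apply: (@le_lt_trans _ _ ((fine (Phi e) / n.+1%:R) *+ n)).
    by rewrite lerMn2r (mulrC e) (mulrC (fine (Phi e))) hc orbT.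
  rewrite -mulr_natr mulrAC ltr_pdivrMr // ltr_pM2l // ltr_nat.
  by [].
have fext := @functional_extensionality_dep 'I_n (fun i => X i).
split.
  rewrite /is_vspace /=.
  split; first by move=> x y z; apply: fext => i; rewrite addrA.
  split; first by move=> x y; apply: fext => i; rewrite addrC.
  split; first by move=> x; apply: fext => i; rewrite add0r.
  split; first by move=> x; apply: fext => i; rewrite addNr.
  split; first by move=> x; apply: fext => i; rewrite scale1r.
  split; first by move=> a b x; apply: fext => i; rewrite scalerA.
  split; first by move=> a x y; apply: fext => i; rewrite scalerDr.
  by move=> a b x; apply: fext => i; rewrite scalerDl.
have dsym : forall i (a b : X i), d i a b = d i b a.
  by move=> i a b; have [_ [[_ hs _] _]] := HF i; apply: hs.
have dtri : forall i (a b c : X i), d i a c <= d i a b + d i b c.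
  by move=> i a b c; have [_ [[_ _ ht] _]] := HF i; apply: ht.
have deq0 : forall i (a b : X i), d i a b = 0 <-> a = b.
  by move=> i a b; have [_ [[h0 _ _] _]] := HF i; apply: h0.
split.
  split.
  - move=> x y; split.
    + move=> hD; have [h0 h1] := Dsp x y.
      rewrite hD (phi0 HY) in h1.
      apply: fext => i; apply/deq0.
      have := @psumr_eq0P _ _ _ (fun j => fine (Phi (d j (x j) (y j)))) (fun j _ => phi_ge0 HY (d j (x j) (y j))) (esym h1) i isT.
      move=> hi; apply/le_anti; rewrite dge0 andbT.
      rewrite leNgt; apply/negP => hp.
      by have := phi_gt0 HY HM hp; rewrite hi ltxx.
    + move=> <-; have [h0 h1] := Dsp x x.
      have S0 : S x x = 0.
        by apply: big1 => i _; rewrite (proj2 (deq0 i _ _) erefl) (phi0 HY).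
      rewrite S0 -(phi0 HY) in h1.
      apply/le_anti; rewrite h0 andbT.
      by apply: (phi_le_inv HY HM) => //; rewrite h1.
  - move=> x y; rewrite /D /S.
    by under eq_bigr => i _ do rewrite dsym.
  - move=> x y z.
    have [hxy1 hxy2] := Dsp x y; have [hyz1 hyz2] := Dsp y z; have [hxz1 hxz2] := Dsp x z.
    apply: (phi_le_inv HY HM); first exact: addr_ge0.
    rewrite hxz2; apply: le_trans; last first.
      apply: (mulholland HY HM (a := fun i => d i (x i) (y i)) (b := fun i => d i (y i) (z i))) => //.
    apply: ler_sum => i _; apply: (phi_le HY HM); first exact: dge0.
    exact: dtri.
split.
  move=> x y z; rewrite /D /S /=.
  by under eq_bigr => i _ do (have [_ [_ [htr _]]] := HF i; rewrite (htr (x i) (y i) (z i))).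
split.
  move=> x0 y0 e e0.
  have ee0 : 0 < e / n.+1%:R by rewrite divr_gt0 // ltr0n.
  have hc : forall i, exists del : R, 0 < del /\ forall a b : X i, d i a (x0 i) < del ->
      d i b (y0 i) < del -> d i (a + b) (x0 i + y0 i) < e / n.+1%:R.
    move=> i; have [_ [_ [_ [hadd _]]]] := HF i.
    have [del del0 hdel] := hadd (x0 i) (y0 i) _ ee0.
    by exists del; split.
  have [f hf] := choice hc.
  have [m [m0 hm]] := common_bound (f := f) (fun i => proj1 (hf i)).
  exists m => // x y hx hy.
  apply: small => // i /=.
  apply: (proj2 (hf i)).
    exact: lt_le_trans (le_lt_trans (comp_le x x0 i) hx) (hm i).
  exact: lt_le_trans (le_lt_trans (comp_le y y0 i) hy) (hm i).
split.
  move=> a0 x0 e e0.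
  have ee0 : 0 < e / n.+1%:R by rewrite divr_gt0 // ltr0n.
  have hc : forall i, exists p : K * R, [/\ 0 < p.1, 0 < p.2 & forall (a : K) (b : X i),
      `|a - a0| < p.1 -> d i b (x0 i) < p.2 -> d i (a *: b) (a0 *: x0 i) < e / n.+1%:R].
    move=> i; have [_ [_ [_ [_ [hsc _]]]]] := HF i.
    have [dK [del [dK0 del0 hdel]]] := hsc a0 (x0 i) _ ee0.
    by exists (dK, del); split.
  have [f hf] := choice hc.
  have [mK [mK0 hmK]] := common_bound (f := fun i => (f i).1) (fun i => let: And3 h _ _ := hf i in h).
  have [m [m0 hm]] := common_bound (f := fun i => (f i).2) (fun i => let: And3 _ h _ := hf i in h).
  exists mK, m; split => // a x ha hx.
  apply: small => // i /=.
  have [_ _ hi] := hf i.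
  apply: hi.
    exact: lt_le_trans ha (hmK i).
  exact: lt_le_trans (le_lt_trans (comp_le x x0 i) hx) (hm i).
move=> u hu.
have hcomp : forall i, exists l : X i, forall e : R, 0 < e -> exists N : nat,
    forall m, (N <= m)%N -> d i (u m i) l < e.
  move=> i; have [_ [_ [_ [_ [_ hcpl]]]]] := HF i.
  apply: (hcpl (fun m => u m i)) => e e0.
  have [N hN] := hu e e0; exists N => m k hm hk.
  exact: le_lt_trans (comp_le _ _ i) (hN m k hm hk).
pose l : V := fun i => xget 0 [set l : X i | forall e : R, 0 < e -> exists N : nat,
    forall m, (N <= m)%N -> d i (u m i) l < e].
have hl : forall i, forall e : R, 0 < e -> exists N : nat,
    forall m, (N <= m)%N -> d i (u m i) (l i) < e.
  by move=> i; apply: (xgetPex 0 (hcomp i)).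
exists l => e e0.
have ee0 : 0 < e / n.+1%:R by rewrite divr_gt0 // ltr0n.
have [g hg] := choice (fun i => hl i _ ee0).
exists (\max_(i < n) g i)%N => m hm.
apply: small => // i.
apply: hg; apply: leq_trans hm.
exact: leq_bigmax.
Qed.
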